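(* Let $P$ be a finite set of points in $\mathbb{R}^2$ in general position. For all vertices $u,v$ of the convex hull of $P$ and all points $p\in A(u)\setminus A(v)$, after deleting $v$ from $P$, the point $p$ belongs to $A(u)'$, the set of points active for $u$ with respect to $P\setminus\{v\}$.
   Context: Convex layers: $L^1$ is the set of vertices of the convex hull of the current point set, $L^2$ the set of vertices of the convex hull of the remaining points after removing $L^1$. A point $p$ is active for $u\in L^1$ if, upon deleting $u$ and recomputing the first and second convex layers, $p$ moves to the first layer; $A(u)$ is the set of points active for $u$. *)

(* Defs.v *)
From HB Require Import structures.
From mathcomp Require Import all_boot all_order all_algebra.
From mathcomp Require Import finmap.
From mathcomp Require Import boolp.
Set Implicit Arguments. Unset Strict Implicit. Unset Printing Implicit Defensive.
Import Order.TTheory GRing.Theory Num.Theory.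
Local Open Scope ring_scope.
Local Open Scope fset_scope.

Definition point (R : realFieldType) := (R * R)%type.

Definition in_conv (R : realFieldType) (Q : {fset point R}) (p : point R) : Prop :=
  exists w : point R -> R,
    (forall q, q \in Q -> 0 <= w q) /\
    \sum_(q <- Q) w q = 1 /\
    \sum_(q <- Q) w q * q.1 = p.1 /\
    \sum_(q <- Q) w q * q.2 = p.2.

(* Twice the signed area of the triangle abc. *)
Definition orient (R : realFieldType) (a b c : point R) : R :=
  (b.1 - a.1) * (c.2 - a.2) - (b.2 - a.2) * (c.1 - a.1).

Definition general_position (R : realFieldType) (P : {fset point R}) : Prop :=
  forall a b c, a \in P -> b \in P -> c \in P ->
    a != b -> b != c -> a != c -> orient a b c != 0.

Definition hull_vertex (R : realFieldType) (S : {fset point R}) (p : point R) : Prop :=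
  p \in S /\ ~ in_conv (S `\ p) p.

Definition layer1 (R : realFieldType) (S : {fset point R}) (p : point R) : Prop :=
  hull_vertex S p.

Definition layer2 (R : realFieldType) (S : {fset point R}) (p : point R) : Prop :=
  p \in S /\ ~ layer1 S p /\
  ~ in_conv ([fset q in S | ~~ `[< layer1 S q >]] `\ p) p.

Definition active (R : realFieldType) (S : {fset point R}) (u p : point R) : Prop :=
  layer2 S p /\ layer1 (S `\ u) p.

(* Main.v *)
Require Import Defs.
From HB Require Import structures.
From mathcomp Require Import all_boot all_order all_algebra.
From mathcomp Require Import finmap.
From mathcomp Require Import boolp.
Local Open Scope fset_scope.
Import Order.TTheory GRing.Theory Num.Theory.

Lemma in_conv_mono (R : realFieldType) (Q Q' : {fset point R}) p :
  Q `<=` Q' -> in_conv Q p -> in_conv Q' p.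
Proof.
move=> sQ [w [w0 [w1 [wx wy]]]].
pose w' := fun q => if q \in Q then w q else 0%R.
have E : forall F : point R -> R, (forall q, F q = w q * (F q / w q))%R -> True by [].
exists w'; split; [|split; [|split]].
- by move=> q _; rewrite /w'; case: ifP => // /w0.
- rewrite -w1 -(big_fset_incl _ sQ); last by move=> x _ xQ; rewrite /w' /= (negbTE xQ).
  by apply: eq_big_seq => x xQ; rewrite /w' xQ.
- rewrite -wx -(big_fset_incl _ sQ); last by move=> x _ xQ; rewrite /w' /= (negbTE xQ) GRing.mul0r.
  by apply: eq_big_seq => x xQ; rewrite /w' xQ.
- rewrite -wy -(big_fset_incl _ sQ); last by move=> x _ xQ; rewrite /w' /= (negbTE xQ) GRing.mul0r.
  by apply: eq_big_seq => x xQ; rewrite /w' xQ.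
Qed.

Lemma hull_vertex_sub (R : realFieldType) (S S' : {fset point R}) q :
  S' `<=` S -> q \in S' -> hull_vertex S q -> hull_vertex S' q.
Proof.
move=> sS qS [_ nc]; split => // hc; apply: nc.
by apply: in_conv_mono hc; apply: fsetSD.
Qed.

Theorem lemma3 (R : realFieldType) (P : {fset point R}) :
  general_position P ->
  forall u v p : point R,
    layer1 P u -> layer1 P v ->
    active P u p -> ~ active P v p ->
    active (P `\ v) u p.
Proof.
move=> _ u v p [uP _] vH []  [] pP [] np1 np2 [] pPu ncu nav.
have npv : ~ layer1 (P `\ v) p by move=> h; apply: nav.
have pv : p != v by apply/eqP => e; by apply: np1; rewrite e; exact: vH.
have pu : p != u.
  by apply/eqP => e; move: pPu; rewrite in_fsetD1 e eqxx.
split; last first.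
  split; first by rewrite !in_fsetD1 pu pv pP.
  move=> hc; apply: ncu; apply: in_conv_mono hc.
  apply/fsubsetP => x; rewrite !in_fsetD1 => /and3P[-> -> /andP[_ ->]] //.
split; first by rewrite in_fsetD1 pv pP.
split => // hc; apply: np2; apply: in_conv_mono hc.
apply/fsubsetP => x; rewrite !in_fsetD1 !inE /= => /andP[-> /andP[/andP[xv xP] nl]].
rewrite xP /=; apply/negP => /asboolP hv; move/asboolP: nl; apply.
by apply: hull_vertex_sub hv => //; [apply: fsubsetDl | rewrite in_fsetD1 xv xP].
Qed.
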